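(* Fix an integer $r\geq 3$, and let $G$ be a balanced $r$-partite graph on $rn$ vertices with $\delta^*(G)>\left(1-\frac{1}{r-1}\right)n$. Then for any vertices $u,v\in V(G)$ there exist copies $K$ and $K'$ of $K_r$ in $G$ such that $u\in V(K)$, $v\in V(K')$, and $K$ and $K'$ have at least one vertex in common.
   Context: For an $r$-partite graph $G$ with vertex classes $V_1,\dots,V_r$, $G$ is balanced if all classes have the same size, and $\delta^*(G)$ is the largest integer $m$ such that for all $i\neq j$ every vertex of $V_i$ has at least $m$ neighbours in $V_j$. *)

(* Defs.v *)
From HB Require Import structures.
From mathcomp Require Import all_boot all_order all_algebra.
Set Implicit Arguments. Unset Strict Implicit. Unset Printing Implicit Defensive.
Import Order.TTheory GRing.Theory Num.Theory.

Definition simple_graph (T : finType) (e : rel T) : Prop :=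
  symmetric e /\ irreflexive e.

Definition r_partite (T : finType) (r : nat) (e : rel T) (c : T -> 'I_r) : Prop :=
  forall x y, e x y -> c x != c y.

Definition balanced (T : finType) (r n : nat) (c : T -> 'I_r) : Prop :=
  forall i : 'I_r, #|[set x | c x == i]| = n.

Definition deg_in (T : finType) (r : nat) (e : rel T) (c : T -> 'I_r)
  (x : T) (j : 'I_r) : nat :=
  #|[set y | e x y & c y == j]|.

(* delta^*(G) > t  :  for all i <> j, every vertex of V_i has more than t
   neighbours in V_j  (t a rational threshold). *)
Definition delta_star_gt (T : finType) (r : nat) (e : rel T) (c : T -> 'I_r)
  (t : rat) : Prop :=
  forall x : T, forall j : 'I_r, c x != j -> (t < (deg_in e c x j)%:R)%R.

Definition is_Kr (T : finType) (r : nat) (e : rel T) (K : {set T}) : Prop :=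
  #|K| = r /\ {in K &, forall x y, x != y -> e x y}.

(* Main.v *)
Require Import Defs.
From HB Require Import structures.
From mathcomp Require Import all_boot all_order all_algebra.
From mathcomp Require Import ring lra zify.
Import Order.TTheory GRing.Theory Num.Theory.
Set Implicit Arguments. Unset Strict Implicit. Unset Printing Implicit Defensive.

Lemma rat_step (m n d : nat) : (0 < m)%N -> (d <= n)%N ->
  (((1 - 1 / m%:R) * n%:R : rat) < d%:R)%R -> ((n - d) * m < n)%N.
Proof.
move=> m0 dn H.
rewrite -(ltr_nat rat) natrM natrB //.
have m0' : (0 < m%:R :> rat)%R by rewrite ltr0n.
have H2 := H; rewrite -(ltr_pM2l m0') in H2.
have E : (m%:R * ((1 - 1 / m%:R) * n%:R) = m%:R * n%:R - n%:R :> rat)%R.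
  by field; rewrite lt0r_neq0.
rewrite E in H2. nra.
Qed.

Lemma card_bigcup_le (T I : finType) (S : {pred I}) (F : I -> {set T}) :
  (#|\bigcup_(x in S) F x| <= \sum_(x in S) #|F x|)%N.
Proof.
elim/big_ind2: _ => //. by rewrite cards0.
move=> a A b B Ha Hb; apply: leq_trans (leq_card_setU A B).1 _; exact: leq_add.
Qed.

Definition bad (T : finType) (r : nat) (e : rel T) (c : T -> 'I_r) x j :=
  [set y | (c y == j) && ~~ e x y].

Lemma bad_lt (r n : nat) (T : finType) (e : rel T) (c : T -> 'I_r) :
  (0 < r.-1)%N -> balanced n c ->
  delta_star_gt e c ((1 - 1 / (r.-1)%:R) * n%:R)%R ->
  forall x j, c x != j -> (#|bad e c x j| * r.-1 < n)%N.
Proof.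
move=> m0 hb hd x j cxj.
have := cardsID [set y | e x y] [set y | c y == j].
rewrite hb.
have -> : [set y | c y == j] :&: [set y | e x y] = [set y | e x y & c y == j].
  by apply/setP => y; rewrite !inE andbC.
have -> : [set y | c y == j] :\: [set y | e x y] = bad e c x j.
  by apply/setP => y; rewrite !inE andbC.
move=> Hn.
have := rat_step m0 _ (hd x j cxj).
rewrite /deg_in -Hn addKn; apply; exact: leq_addr.
Qed.

Lemma common (r n : nat) (T : finType) (e : rel T) (c : T -> 'I_r) :
  (0 < r.-1)%N -> (0 < n)%N -> balanced n c ->
  delta_star_gt e c ((1 - 1 / (r.-1)%:R) * n%:R)%R ->
  forall (S : {set T}) j, (#|S| <= r.-1)%N -> (forall x, x \in S -> c x != j) ->
  exists y, c y == j /\ forall x, x \in S -> e x y.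
Proof.
move=> m0 n0 hb hd S j hS hj.
set U := \bigcup_(x in S) bad e c x j.
have hsum : (\sum_(x in S) #|bad e c x j| * r.-1 <= #|S| * n.-1)%N.
  rewrite -sum_nat_const; apply: leq_sum => x xS.
  have := bad_lt m0 hb hd (hj x xS); lia.
have hU : (#|U| < n)%N.
  apply: leq_ltn_trans (card_bigcup_le _ _) _.
  have h2 : (\sum_(x in S) #|bad e c x j| * r.-1 <= n.-1 * r.-1)%N.
    apply: leq_trans hsum _; rewrite mulnC; exact: leq_mul.
  rewrite -big_distrl /= leq_pmul2r // in h2; lia.
have : ~~ ([set y | c y == j] \subset U).
  apply/negP => /subset_leq_card; rewrite hb; lia.
case/subsetPn => y; rewrite inE => cyj yU; exists y; split => // x xS.
apply/negPn/negP => exy; move/negP: yU; apply; apply/bigcupP; exists x => //.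
by rewrite inE cyj.
Qed.

Lemma extend (r n : nat) (T : finType) (e : rel T) (c : T -> 'I_r) :
  (0 < r.-1)%N -> (0 < n)%N -> simple_graph e -> r_partite e c -> balanced n c ->
  delta_star_gt e c ((1 - 1 / (r.-1)%:R) * n%:R)%R ->
  forall k (K : {set T}), {in K &, forall x y, x != y -> e x y} ->
  (#|K| + k = r)%N -> exists K', is_Kr r e K' /\ K \subset K'.
Proof.
move=> m0 n0 [esym eirr] hp hb hd; elim=> [|k IH] K hK hc.
  by exists K; split => //; split => //; rewrite -hc addn0.
have inj : {in K &, injective c}.
  move=> x y xK yK cxy; apply/eqP; apply/negPn/negP => nxy.
  by move: (hp _ _ (hK x y xK yK nxy)); rewrite cxy eqxx.
have : ~~ ([set: 'I_r] \subset c @: K).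
  apply/negP => /subset_leq_card; rewrite cardsT card_ord card_in_imset //; lia.
case/subsetPn => j _ jK.
have [y [cyj hy]] := common m0 n0 hb hd (S := K) (j := j) ltac:(lia)
  (fun x xK => ltac:(apply/eqP => cxj; move/negP: jK; apply; rewrite -cxj; exact: imset_f)).
have yK : y \notin K.
  apply/negP => yK; move/negP: jK; apply; rewrite -(eqP cyj); exact: imset_f.
have hK1 : {in y |: K &, forall x y0, x != y0 -> e x y0}.
  move=> a b; rewrite !in_setU1 => /orP ha /orP hb2 ab.
  case: ha => [/eqP ea | aK]; case: hb2 => [/eqP eb | bK].
  - by rewrite ea eb eqxx in ab.
  - by rewrite ea esym; apply: hy.
  - by rewrite eb; apply: hy.
  - exact: hK.
have hc1 : (#|y |: K| + k = r)%N by rewrite cardsU1 yK /=; lia.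
have [K' [HK' sub]] := IH (y |: K) hK1 hc1.
by exists K'; split => //; apply: subset_trans sub; exact: subsetUr.
Qed.

Theorem proposition2p4 (r n : nat) (T : finType) (e : rel T) (c : T -> 'I_r) :
  3 <= r ->
  simple_graph e ->
  r_partite e c ->
  balanced n c ->
  delta_star_gt e c ((1 - 1 / (r.-1)%:R) * n%:R)%R ->
  forall u v : T,
    exists K K' : {set T},
      [/\ is_Kr r e K, is_Kr r e K', u \in K, v \in K' & K :&: K' != set0].
Proof.
move=> r3 hs hp hb hd u v.
have m0 : (0 < r.-1)%N by lia.
have n0 : (0 < n)%N.
  rewrite -(hb (c u)) card_gt0; apply/set0Pn; exists u; by rewrite inE.
have : ~~ ([set: 'I_r] \subset [set c u; c v]).
  apply/negP => /subset_leq_card; rewrite cardsT card_ord.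
  have := cards2 (c u) (c v); case: (c u != c v) => /= ->; lia.
case/subsetPn => j _; rewrite !inE negb_or => /andP [ju jv].
have [w [cwj hw]] := common m0 n0 hb hd (S := [set u; v]) (j := j)
  ltac:(rewrite cards2; case: (u != v); simpl; lia)
  (fun x => ltac:(rewrite !inE => /orP [/eqP -> | /eqP ->];
     [by rewrite eq_sym | by rewrite eq_sym])).
have euw : e u w by apply: hw; rewrite !inE eqxx.
have evw : e v w by apply: hw; rewrite !inE eqxx orbT.
have [esym eirr] := hs.
have pair x : e x w -> {in [set x; w] &, forall a b, a != b -> e a b}.
  move=> exw a b; rewrite !inE => /orP [/eqP -> | /eqP ->] /orP [/eqP -> | /eqP ->];
    rewrite ?eqxx // => _; by rewrite esym.
have c2 x : e x w -> (#|[set x; w]| + (r - 2) = r)%N.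
  move=> exw; rewrite cards2.
  have -> : x != w by apply/eqP => xw; move: exw; rewrite xw eirr.
  simpl; lia.
have [K [HK sK]] := extend m0 n0 hs hp hb hd (pair u euw) (c2 u euw).
have [K' [HK' sK']] := extend m0 n0 hs hp hb hd (pair v evw) (c2 v evw).
exists K, K'; split => //.
- by apply: (subsetP sK); rewrite !inE eqxx.
- by apply: (subsetP sK'); rewrite !inE eqxx.
- apply/set0Pn; exists w; rewrite inE; apply/andP; split.
  + by apply: (subsetP sK); rewrite !inE eqxx orbT.
  + by apply: (subsetP sK'); rewrite !inE eqxx orbT.
Qed.
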